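(* Let $\mathcal{X}$ be a finite set and let $P_X$ be a probability distribution on $\mathcal{X}$. For every $\alpha\in[0,\infty)$, $$\min_{P_{\hat{X}}} H_\alpha(P_X,P_{\hat{X}}) = H_\alpha(P_X),$$ where the minimum is over all probability distributions $P_{\hat{X}}$ on $\mathcal{X}$, and the minimum is attained at $P_{\hat{X}}^*=P_{X_\alpha}$.
   Context: $\mathrm{supp}(P_X)=\{x: P_X(x)>0\}$. The $\alpha$-cross entropy of two distributions $P_X,P_{\hat X}$ on $\mathcal{X}$ is $H_\alpha(P_X,P_{\hat X})=\frac{\alpha}{1-\alpha}\log\sum_{x}P_X(x)P_{\hat X}(x)^{\frac{\alpha-1}{\alpha}}$ for $\alpha\in(0,1)\cup(1,\infty)$; $H_0(P_X,P_{\hat X})=\log\max_{x\in\mathrm{supp}(P_X)}\frac{1}{P_{\hat X}(x)}$; $H_1(P_X,P_{\hat X})=-\sum_x P_X(x)\log P_{\hat X}(x)$; $H_\infty(P_X,P_{\hat X})=-\log\sum_x P_X(x)P_{\hat X}(x)$ (with the usual conventions that these may equal $+\infty$). The Rényi entropy is $H_\alpha(P_X)=\frac{1}{1-\alpha}\log\sum_x P_X(x)^\alpha$ for $\alpha\in(0,1)\cup(1,\infty)$, $H_0(P_X)=\log|\mathrm{supp}(P_X)|$, $H_1(P_X)=-\sum_x P_X(x)\log P_X(x)$, $H_\infty(P_X)=-\log\max_x P_X(x)$. The scaled distribution $P_{X_\alpha}$ is $P_{X_\alpha}(x)=P_X(x)^\alpha/\sum_{x'}P_X(x')^\alpha$ for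 $\alpha\in(0,\infty)$ (so $P_{X_1}=P_X$); $P_{X_0}(x)=1/|\mathrm{supp}(P_X)|$ for $x\in\mathrm{supp}(P_X)$ and $0$ otherwise; and for $\alpha=\infty$, $P_{X_\infty}(x)=1/|\arg\max_{x'}P_X(x')|$ for $x\in\arg\max_{x'}P_X(x')$ and $0$ otherwise. *)

(* Defs.v *)
From HB Require Import structures.
From mathcomp Require Import all_boot all_order all_algebra.
From mathcomp Require Import all_classical all_reals ereal exp.
Set Implicit Arguments.
Unset Strict Implicit.
Unset Printing Implicit Defensive.
Import Order.TTheory GRing.Theory Num.Theory.
Local Open Scope ring_scope.

Section Defs.
Variables (R : realType) (T : finType).

Definition is_dist (P : T -> R) : Prop :=
  (forall x, 0 <= P x) /\ \sum_(x : T) P x = 1.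

Definition supp (P : T -> R) : {set T} := [set x | 0 < P x].

Definition cross_ent (alpha : R) (P Q : T -> R) : \bar R :=
  if alpha == 0 then
    if [exists x, (x \in supp P) && (Q x == 0)] then +oo%E
    else (ln (\big[Num.max/0]_(x in supp P) (Q x)^-1))%:E
  else if alpha == 1 then
    if [exists x, (x \in supp P) && (Q x == 0)] then +oo%E
    else (- \sum_(x : T) P x * ln (Q x))%:E
  else if alpha < 1 then
    (* 0 < alpha < 1: exponent (alpha-1)/alpha < 0, so Q x = 0 on supp P
       makes a summand (and the whole expression) +oo *)
    if [exists x, (x \in supp P) && (Q x == 0)] then +oo%E
    else (alpha / (1 - alpha) *
          ln (\sum_(x in supp P) P x * Q x `^ ((alpha - 1) / alpha)))%:E
  else
    (* alpha > 1: exponent > 0; the sum is finite, and if it is 0 the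
       logarithm is -oo and alpha/(1-alpha) < 0 gives +oo *)
    let s := \sum_(x : T) P x * Q x `^ ((alpha - 1) / alpha) in
    if s == 0 then +oo%E
    else (alpha / (1 - alpha) * ln s)%:E.

Definition renyi (alpha : R) (P : T -> R) : \bar R :=
  if alpha == 0 then (ln (#|supp P|%:R))%:E
  else if alpha == 1 then (- \sum_(x : T) P x * ln (P x))%:E
  else ((1 - alpha)^-1 * ln (\sum_(x : T) P x `^ alpha))%:E.

Definition scaled (P : T -> R) (alpha : R) : T -> R :=
  fun x =>
    if alpha == 0 then (if x \in supp P then (#|supp P|%:R)^-1 else 0)
    else P x `^ alpha / \sum_(y : T) P y `^ alpha.

End Defs.

(* Main.v *)
Require Import Defs.
From HB Require Import structures.
From mathcomp Require Import all_boot all_order all_algebra.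
From mathcomp Require Import all_classical all_reals ereal exp.
From mathcomp Require Import sequences ring lra.
Import Order.TTheory GRing.Theory Num.Theory.
Local Open Scope ring_scope.

Section Helpers.
Variables (R : realType) (T : finType).
Implicit Types (P Q w y : T -> R) (S : {set T}).

Lemma ln_le_sub1 (z : R) : 0 < z -> ln z <= z - 1.
Proof.
move=> z0; have := @le_ln1Dx R (z - 1); rewrite (addrC 1) subrK; apply; lra.
Qed.

Lemma gibbs S w Q : (forall x, x \in S -> 0 < w x) -> \sum_(x in S) w x = 1 ->
  (forall x, x \in S -> 0 < Q x) -> \sum_(x in S) Q x <= 1 ->
  \sum_(x in S) w x * ln (Q x) <= \sum_(x in S) w x * ln (w x).
Proof.
move=> w0 w1 Q0 Q1; rewrite -subr_le0 -sumrB.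
apply: (@le_trans _ _ (\sum_(x in S) (Q x - w x))); last first.
  by rewrite sumrB w1 subr_le0.
apply: ler_sum => x xS; rewrite -mulrBr -ln_div ?posrE ?Q0 ?w0 //.
have h := ler_wpM2l (ltW (w0 x xS)) (ln_le_sub1 _ (divr_gt0 (Q0 x xS) (w0 x xS))).
apply: le_trans h _.
by rewrite mulrBr mulr1 mulrCA divff ?mulr1 // gt_eqF // w0.
Qed.

Lemma jensen_ln S w y : (forall x, x \in S -> 0 < w x) -> \sum_(x in S) w x = 1 ->
  (forall x, x \in S -> 0 < y x) ->
  \sum_(x in S) w x * ln (y x) <= ln (\sum_(x in S) w x * y x).
Proof.
move=> w0 w1 y0; set m := \sum_(x in S) w x * y x.
have m0 : 0 < m.
  case: (set_0Vmem S) => [S0|[x0 x0S]].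
    by move: w1; rewrite S0 big_set0 => /eqP; rewrite eq_sym oner_eq0.
  rewrite /m (bigD1 x0) //=; apply: (lt_le_trans (mulr_gt0 (w0 _ x0S) (y0 _ x0S))).
  rewrite lerDl sumr_ge0 // => i /andP[iS _]; exact: ltW (mulr_gt0 (w0 _ iS) (y0 _ iS)).
have h1 : \sum_(x in S) w x * ln (y x / m) <= 0.
  apply: (@le_trans _ _ (\sum_(x in S) (w x * y x / m - w x))); last first.
    by rewrite sumrB -mulr_suml w1 -/m divff ?subrr // gt_eqF.
  apply: ler_sum => x xS.
  have h := ler_wpM2l (ltW (w0 x xS)) (ln_le_sub1 _ (divr_gt0 (y0 x xS) m0)).
  apply: le_trans h _.
  by rewrite mulrBr mulr1 mulrA.
have h2 : \sum_(x in S) w x * ln (y x / m) =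
    \sum_(x in S) w x * ln (y x) - ln m.
  rewrite -[ln m]mul1r -w1 mulr_suml -sumrB; apply: eq_bigr => x xS.
  by rewrite ln_div ?posrE ?y0 // mulrBr.
by rewrite -subr_le0 -h2.
Qed.

Lemma bernoulli_powR (e t : R) : 0 < e < 1 -> 0 <= t -> t `^ e <= 1 + e * (t - 1).
Proof.
move=> /andP[e0 e1] t0.
have e1' : 0 < 1 - e by lra.
have ie0 : 0 < e^-1 by rewrite invr_gt0.
have ie1 : 0 < (1 - e)^-1 by rewrite invr_gt0.
have := @conjugate_powR R (t `^ e) 1 e^-1 (1 - e)^-1 (powR_ge0 _ _) ler01 ie0 ie1.
rewrite !invrK (addrC e) subrK => /(_ erefl).
rewrite mulr1 -powRrM divff ?gt_eqF // powRr1 // powR1 /=.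
move=> h; apply: le_trans h _; lra.
Qed.

Lemma sum_sub_le S (f : T -> R) : (forall x, 0 <= f x) ->
  \sum_(x in S) f x <= \sum_x f x.
Proof.
move=> f0; rewrite big_mkcond /=; apply: ler_sum => x _.
by case: ifP => // _; exact: f0.
Qed.

Lemma powR_pos (a r : R) : 0 < a -> a `^ r = expR (r * ln a).
Proof. by move=> a0; rewrite /powR gt_eqF. Qed.

End Helpers.

Section Main.
Variables (R : realType) (T : finType) (P : T -> R).
Hypothesis hP : is_dist P.

Lemma P_ge0 x : 0 <= P x. Proof. by case: hP. Qed.
Lemma P_sum : \sum_x P x = 1. Proof. by case: hP. Qed.
Lemma inS x : (x \in supp P) = (0 < P x). Proof. by rewrite inE. Qed.
Lemma notS x : x \notin supp P -> P x = 0.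
Proof. by rewrite inS => /negbTE h; apply/eqP; rewrite eq_le P_ge0 andbT leNgt h. Qed.

Lemma sum_supp (f : T -> R) : (forall x, x \notin supp P -> f x = 0) ->
  \sum_x f x = \sum_(x in supp P) f x.
Proof.
move=> h; rewrite [RHS]big_mkcond; apply: eq_bigr => x _.
by case: ifP => // /negbT; exact: h.
Qed.

Lemma sum_suppM (g : T -> R) :
  \sum_x P x * g x = \sum_(x in supp P) P x * g x.
Proof. by apply: sum_supp => x /notS ->; rewrite mul0r. Qed.

Lemma sumS_P : \sum_(x in supp P) P x = 1.
Proof. by rewrite -P_sum (@sum_supp P notS). Qed.

Lemma supp_ne : exists x0, x0 \in supp P.
Proof.
case: (set_0Vmem (supp P)) => [S0|[x0 h]]; last by exists x0.
by have := sumS_P; rewrite S0 big_set0 => /eqP; rewrite eq_sym oner_eq0.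
Qed.

Lemma case0 : [/\ is_dist (scaled P 0), cross_ent 0 P (scaled P 0) = renyi 0 P &
   forall Q, is_dist Q -> (renyi 0 P <= cross_ent 0 P Q)%E].
Proof.
have [x0 x0S] := supp_ne.
set n := (#|supp P|%:R : R).
have n0 : 0 < n by rewrite ltr0n; apply/card_gt0P; exists x0.
have sc x : scaled P 0 x = if x \in supp P then n^-1 else 0 by rewrite /scaled eqxx.
split.
- split => [x|]; first by rewrite sc; case: ifP => // _; rewrite invr_ge0 ltW.
  rewrite (@sum_supp (scaled P 0)); last by move=> x /negbTE xS; rewrite sc xS.
  rewrite (eq_bigr (fun=> n^-1)); last by move=> x xS; rewrite sc xS.
  by rewrite sumr_const -mulr_natr -/n mulVf ?gt_eqF.
- rewrite /cross_ent /renyi eqxx.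
  have -> : [exists x, (x \in supp P) && (scaled P 0 x == 0)] = false.
    apply/negbTE/existsPn => x; rewrite sc; case: ifP => //= _.
    by rewrite invr_eq0 gt_eqF.
  congr (_%:E); congr (ln _).
  apply/eqP; rewrite eq_le; apply/andP; split.
    by apply: bigmax_le; [exact: ltW | move=> x xS; rewrite sc xS invrK].
  apply: (@le_trans _ _ ((scaled P 0 x0)^-1)); first by rewrite sc x0S invrK.
  exact: le_bigmax_cond.
- move=> Q [Q0 Q1]; rewrite /cross_ent /renyi eqxx.
  case: ifP => [_|/negbT/existsPn hQ]; first exact: leey.
  have Qpos x : x \in supp P -> 0 < Q x.
    by move=> xS; have := hQ x; rewrite xS /= lt0r Q0 andbT.
  set M := \big[Num.max/0]_(x in supp P) (Q x)^-1.
  have hM x : x \in supp P -> (Q x)^-1 <= M by move=> xS; exact: le_bigmax_cond.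
  have M0 : 0 < M by apply: lt_le_trans (hM x0 x0S); rewrite invr_gt0 Qpos.
  rewrite lee_fin ler_ln ?posrE //.
  have hQM x : x \in supp P -> M^-1 <= Q x.
    move=> xS; rewrite -[Q x]invrK lef_pV2 ?posrE ?invr_gt0 ?Qpos //; exact: hM.
  have : \sum_(x in supp P) M^-1 <= 1.
    apply: le_trans (ler_sum _ hQM) _; rewrite -Q1; exact: sum_sub_le.
  rewrite sumr_const -[M^-1 *+ _]mulr_natr -/n mulrC.
  by rewrite ler_pdivrMr // mul1r.
Qed.


Lemma case1 : [/\ is_dist (scaled P 1), cross_ent 1 P (scaled P 1) = renyi 1 P &
   forall Q, is_dist Q -> (renyi 1 P <= cross_ent 1 P Q)%E].
Proof.
have sc : scaled P 1 = P.
  apply: funext => x; rewrite /scaled oner_eq0 /=.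
  have -> : \sum_y P y `^ 1 = 1.
    by rewrite -[RHS]P_sum; apply: eq_bigr => y _; rewrite powRr1 // P_ge0.
  by rewrite divr1 powRr1 // P_ge0.
rewrite sc; split => //.
- rewrite /cross_ent /renyi oner_eq0 eqxx.
  have -> : [exists x, (x \in supp P) && (P x == 0)] = false.
    by apply/negbTE/existsPn => x; apply/negP => /andP[]; rewrite inS => /gt_eqF ->.
  by [].
- move=> Q [Q0 Q1]; rewrite /cross_ent /renyi oner_eq0 eqxx.
  case: ifP => [_|/negbT/existsPn hQ]; first exact: leey.
  have Qpos x : x \in supp P -> 0 < Q x.
    by move=> xS; have := hQ x; rewrite xS /= lt0r Q0 andbT.
  rewrite lee_fin lerN2 !sum_suppM; apply: gibbs => //.
  - by move=> x; rewrite inS.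
  - exact: sumS_P.
  - by rewrite -Q1; exact: sum_sub_le.
Qed.


Lemma mul_expR (p A : R) : 0 < p -> p * expR A = expR (ln p + A).
Proof. by move=> p0; rewrite expRD lnK. Qed.

Section Pos.
Variable a : R.
Hypotheses (a0 : 0 < a) (a1 : a != 1).
Let Z := \sum_y P y `^ a.
Let e := (a - 1) / a.

Lemma powP0 x : x \notin supp P -> P x `^ a = 0.
Proof. by move/notS ->; rewrite powR0 // gt_eqF. Qed.

Lemma PS_pos {x} : x \in supp P -> 0 < P x.
Proof. by rewrite inS. Qed.

Lemma Z_gt0 : 0 < Z.
Proof.
have [x0 x0S] := supp_ne.
have h := @powR_gt0 R (P x0) a (PS_pos x0S).
rewrite /Z (bigD1 x0) //=; apply: (lt_le_trans h).
by rewrite lerDl sumr_ge0 // => i _; exact: powR_ge0.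
Qed.

Lemma ZS : Z = \sum_(x in supp P) P x `^ a.
Proof. exact: (@sum_supp (fun y => P y `^ a) powP0). Qed.

Lemma scE x : scaled P a x = P x `^ a / Z.
Proof. by rewrite /scaled gt_eqF. Qed.

Lemma Qs_pos x : x \in supp P -> 0 < scaled P a x.
Proof. by move=> xS; rewrite scE divr_gt0 ?Z_gt0 // powR_gt0 // PS_pos. Qed.

Lemma lnQs x : x \in supp P -> ln (scaled P a x) = a * ln (P x) - ln Z.
Proof.
by move=> xS; rewrite scE ln_div ?posrE ?powR_gt0 ?Z_gt0 ?PS_pos // ln_powR.
Qed.

Lemma Qs_dist : is_dist (scaled P a).
Proof.
split => [x|]; first by rewrite scE divr_ge0 ?powR_ge0 // ltW // Z_gt0.
rewrite (eq_bigr (fun x => P x `^ a / Z)); last by move=> x _; rewrite scE.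
by rewrite -mulr_suml -/Z divff // gt_eqF // Z_gt0.
Qed.

Lemma sumS_Qs : \sum_(x in supp P) scaled P a x = 1.
Proof.
case: Qs_dist => _ <-; apply/esym/sum_supp => x xS.
by rewrite scE powP0 // mul0r.
Qed.

Lemma cross_pt x : x \in supp P ->
  P x * scaled P a x `^ e = P x `^ a * expR (- e * ln Z).
Proof.
move=> xS; rewrite !powR_pos ?Qs_pos ?PS_pos // lnQs // mul_expR ?PS_pos //.
rewrite -expRD; congr expR; rewrite /e; field; by rewrite gt_eqF.
Qed.

Lemma sumcross :
  \sum_(x in supp P) P x * scaled P a x `^ e = Z * expR (- e * ln Z).
Proof. by rewrite (eq_bigr _ cross_pt) -mulr_suml -ZS. Qed.

Lemma ln_sumcross : ln (Z * expR (- e * ln Z)) = (1 - e) * ln Z.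
Proof.
rewrite lnM ?posrE ?Z_gt0 ?expR_gt0 // expRK; ring.
Qed.

Lemma final_eq : a / (1 - a) * ((1 - e) * ln Z) = (1 - a)^-1 * ln Z.
Proof.
by rewrite /e; field; rewrite (gt_eqF a0) andbT subr_eq0 eq_sym.
Qed.


Lemma case_lt1 : a < 1 ->
  [/\ is_dist (scaled P a), cross_ent a P (scaled P a) = renyi a P &
   forall Q, is_dist Q -> (renyi a P <= cross_ent a P Q)%E].
Proof.
move=> alt1; rewrite /cross_ent /renyi (gt_eqF a0) (negbTE a1) alt1 -/e -/Z.
split; first exact: Qs_dist.
- have -> : [exists x, (x \in supp P) && (scaled P a x == 0)] = false.
    apply/negbTE/existsPn => x; apply/negP => /andP[] /Qs_pos.
    by move=> /gt_eqF ->.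
  by rewrite sumcross ln_sumcross final_eq.
- move=> Q [Q0 Q1].
  case: ifP => [_|/negbT/existsPn hQ]; first exact: leey.
  have Qpos x : x \in supp P -> 0 < Q x.
    by move=> xS; have := hQ x; rewrite xS /= lt0r Q0 andbT.
  set A := \sum_(x in supp P) P x * Q x `^ e.
  rewrite lee_fin.
  set y := fun x => P x * Q x `^ e / scaled P a x.
  have ypos x : x \in supp P -> 0 < y x.
    move=> xS; rewrite /y divr_gt0 ?Qs_pos // mulr_gt0 ?PS_pos //.
    exact: powR_gt0 (Qpos x xS).
  have J := @jensen_ln R T _ _ _ Qs_pos sumS_Qs ypos.
  have EA : \sum_(x in supp P) scaled P a x * y x = A.
    apply: eq_bigr => x xS; rewrite /y mulrC divfK //; exact: lt0r_neq0 (Qs_pos x xS).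
  rewrite EA in J.
  set pa := \sum_(x in supp P) scaled P a x * ln (P x).
  set qb := \sum_(x in supp P) scaled P a x * ln (Q x).
  have EJ : \sum_(x in supp P) scaled P a x * ln (y x) =
      (1 - a) * pa + e * qb + ln Z.
    rewrite (eq_bigr (fun x => (1 - a) * (scaled P a x * ln (P x)) +
       e * (scaled P a x * ln (Q x)) + scaled P a x * ln Z)); last first.
      move=> x xS; rewrite /y ln_div ?posrE ?Qs_pos ?mulr_gt0 ?PS_pos ?powR_gt0 ?Qpos //.
      rewrite lnM ?posrE ?PS_pos ?powR_gt0 ?Qpos // ln_powR lnQs //; ring.
    by rewrite !big_split /= -!mulr_sumr -mulr_suml sumS_Qs mul1r.
  rewrite EJ in J.
  have QS1 : \sum_(x in supp P) Q x <= 1 by rewrite -Q1; exact: sum_sub_le.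
  have G := @gibbs R T _ _ _ Qs_pos sumS_Qs Qpos QS1.
  have EG : \sum_(x in supp P) scaled P a x * ln (scaled P a x) = a * pa - ln Z.
    rewrite (eq_bigr (fun x => a * (scaled P a x * ln (P x)) - scaled P a x * ln Z));
      last by move=> x xS; rewrite lnQs //; ring.
    by rewrite sumrB -mulr_sumr -mulr_suml sumS_Qs mul1r.
  rewrite -/qb EG in G.
  have J' := ler_wpM2l (ltW a0) J.
  have EqJ : a * ((1 - a) * pa + e * qb + ln Z) =
     a * (1 - a) * pa + (a - 1) * qb + a * ln Z.
    by rewrite /e; field; rewrite gt_eqF.
  rewrite EqJ in J'.
  have a1' : 0 <= 1 - a by lra.
  have G' := ler_wpM2l a1' G.
  have H : ln Z <= a * ln A by nra.
  have -> : a / (1 - a) * ln A = (1 - a)^-1 * (a * ln A).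
    by field; rewrite subr_eq0 eq_sym.
  by apply: ler_wpM2l H; rewrite invr_ge0.
Qed.


Lemma case_gt1 : 1 < a ->
  [/\ is_dist (scaled P a), cross_ent a P (scaled P a) = renyi a P &
   forall Q, is_dist Q -> (renyi a P <= cross_ent a P Q)%E].
Proof.
move=> agt1.
have he0 : 0 < e by rewrite /e divr_gt0 // subr_gt0.
have he1 : e < 1 by rewrite /e ltr_pdivrMr // mul1r; lra.
have e0 : e != 0 by rewrite gt_eqF.
rewrite /cross_ent /renyi (gt_eqF a0) (negbTE a1) ltNge (ltW agt1) /= -/e -/Z.
split; first exact: Qs_dist.
- rewrite sum_suppM sumcross.
  have -> : (Z * expR (- e * ln Z) == 0) = false.
    by rewrite gt_eqF // mulr_gt0 ?Z_gt0 ?expR_gt0.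
  by rewrite ln_sumcross final_eq.
- move=> Q [Q0 Q1].
  set s := \sum_x P x * Q x `^ e.
  case: ifP => [_|/negbT s0]; first exact: leey.
  have s_ge0 : 0 <= s.
    by apply: sumr_ge0 => x _; rewrite mulr_ge0 ?P_ge0 ?powR_ge0.
  have s_pos : 0 < s by rewrite lt0r s0 s_ge0.
  set K := expR ((1 - e) * ln Z).
  have pt x : x \in supp P ->
      P x * Q x `^ e <= K * (scaled P a x + e * (Q x - scaled P a x)).
    move=> xS; have Qs0 := Qs_pos x xS.
    case: (eqVneq (Q x) 0) => [Qx0|Qx0].
      rewrite Qx0 powR0 // mulr0 sub0r; apply: mulr_ge0; first exact: expR_ge0.
      nra.
    have Qp : 0 < Q x by rewrite lt0r Qx0 Q0.
    have B := @bernoulli_powR R e (Q x / scaled P a x) (introT andP (conj he0 he1))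
      (ltW (divr_gt0 Qp Qs0)).
    have eqL : P x * Q x `^ e = K * (scaled P a x * (Q x / scaled P a x) `^ e).
      rewrite !powR_pos ?divr_gt0 // mul_expR ?PS_pos // mul_expR //.
      rewrite /K -expRD ln_div ?posrE // lnQs //; congr expR.
      by rewrite /e; field; rewrite gt_eqF.
    rewrite eqL; apply: ler_wpM2l; first exact: expR_ge0.
    apply: le_trans (ler_wpM2l (ltW Qs0) B) _.
    by rewrite le_eqVlt; apply/orP; left; apply/eqP; field; rewrite gt_eqF.
  have QS1 : \sum_(x in supp P) Q x <= 1 by rewrite -Q1; exact: sum_sub_le.
  have hs : s <= K.
    rewrite /s sum_suppM; apply: le_trans (ler_sum _ pt) _.
    rewrite -mulr_sumr big_split /= -mulr_sumr sumrB sumS_Qs.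
    rewrite -[leRHS]mulr1; apply: ler_wpM2l; first exact: expR_ge0.
    nra.
  have hls : ln s <= (1 - e) * ln Z.
    by rewrite -[X in _ <= X]expRK ler_ln ?posrE ?expR_gt0.
  have H : a * ln s <= ln Z.
    have := ler_wpM2l (ltW a0) hls.
    have -> : a * ((1 - e) * ln Z) = ln Z by rewrite /e; field; rewrite gt_eqF.
    by [].
  rewrite lee_fin.
  have -> : a / (1 - a) * ln s = (1 - a)^-1 * (a * ln s).
    by field; rewrite subr_eq0 eq_sym.
  by apply: ler_wnM2l H; rewrite invr_le0 subr_le0 ltW.
Qed.

End Pos.

End Main.

Theorem theorem1 (R : realType) (T : finType) (P : T -> R) (alpha : R) :
  is_dist P -> 0 <= alpha ->
  [/\ is_dist (scaled P alpha),
      cross_ent alpha P (scaled P alpha) = renyi alpha P &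
      forall Q : T -> R, is_dist Q -> (renyi alpha P <= cross_ent alpha P Q)%E].
Proof.
move=> hP a0.
case: (eqVneq alpha 0) => [->|an0]; first exact: case0 hP.
case: (eqVneq alpha 1) => [->|a1]; first exact: case1 hP.
have apos : 0 < alpha by rewrite lt0r an0 a0.
case: (ltgtP alpha 1) => [lt|gt|eq].
- exact: (@case_lt1 R T P hP alpha apos a1 lt).
- exact: (@case_gt1 R T P hP alpha apos a1 gt).
- by rewrite eq eqxx in a1.
Qed.
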